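(* For every $\varepsilon>0$ there exist $C>0$ and $\varepsilon'>0$ such that for all integers $n,m\ge1$, $$\#\mathcal F^{n,m}(\varepsilon)\le C\,2^{\varepsilon' n};$$ moreover $\varepsilon'$ can be chosen so that $\varepsilon'\to0$ as $\varepsilon\to0$.
   Context: For $\varepsilon>0$ and $k\ge1$, $\mathcal F_k(\varepsilon)$ is the set of pairs of sequences of positive integers $(i_1i_2\cdots i_k;\,j_1j_2\cdots j_k)$ with $i_1<\dots<i_k$ such that: (i) $i_{l+1}-i_l\ge j_l$ for each $1\le l<k$; (ii) $k\le\varepsilon i_k$; (iii) $i_k-\sum_{1\le l<k}j_l\le\varepsilon i_k$. $\mathcal F_k^{n,m}(\varepsilon)$ is the set of elements of $\mathcal F_k(\varepsilon)$ with $i_k=n$ and $j_k=m$, and $\mathcal F^{n,m}(\varepsilon)=\bigcup_{k=1}^n\mathcal F_k^{n,m}(\varepsilon)$. *)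

(* Defs.v *)
From Stdlib Require Import Reals List Arith.
Import ListNotations.
Open Scope R_scope.

(* Indexing: the paper's i_l, j_l (1 <= l <= k) are [nth (l-1) is 0], [nth (l-1) js 0]. *)

Definition sum_first (k : nat) (js : list nat) : nat :=
  fold_right Nat.add 0%nat (firstn k js).

Definition inFk (eps : R) (k : nat) (p : list nat * list nat) : Prop :=
  let (is, js) := p in
  (1 <= k)%nat /\
  length is = k /\ length js = k /\
  (forall l, (l < k)%nat -> (0 < nth l is 0%nat)%nat /\ (0 < nth l js 0%nat)%nat) /\
  (forall l, (l + 1 < k)%nat -> (nth l is 0%nat < nth (l + 1) is 0%nat)%nat) /\
  (forall l, (l + 1 < k)%nat -> (nth l is 0%nat + nth l js 0%nat <= nth (l + 1) is 0%nat)%nat) /\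
  INR k <= eps * INR (nth (k - 1) is 0%nat) /\
  (* (iii) i_k - sum_{l<k} j_l <= eps * i_k  (real subtraction) *)
  INR (nth (k - 1) is 0%nat) - INR (sum_first (k - 1) js) <= eps * INR (nth (k - 1) is 0%nat).

Definition inFknm (eps : R) (k n m : nat) (p : list nat * list nat) : Prop :=
  inFk eps k p /\ nth (k - 1) (fst p) 0%nat = n /\ nth (k - 1) (snd p) 0%nat = m.

Definition inFnm (eps : R) (n m : nat) (p : list nat * list nat) : Prop :=
  exists k, (1 <= k <= n)%nat /\ inFknm eps k n m p.

(* Main.v *)
Require Import Defs.
From Stdlib Require Import Reals List Sorted Lia Lra ZArith.
Import ListNotations.
Open Scope R_scope.
Fixpoint incs (lo N K : nat) : list (list nat) :=
  match N with
  | O => [[]]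
  | S N' => incs (S lo) N' K ++
      match K with O => [] | S K' => map (cons lo) (incs (S lo) N' K') end
  end.

Lemma incs_complete (N : nat) : forall lo K l, StronglySorted lt l ->
  (forall a, In a l -> lo <= a < lo + N)%nat -> (length l <= K)%nat ->
  In l (incs lo N K).
Proof.
  induction N as [|N IH]; intros lo K l Hs Hr Hl.
  - destruct l as [|a l]; [left; reflexivity|].
    specialize (Hr a (or_introl eq_refl)); lia.
  - simpl. apply in_or_app.
    destruct l as [|a l].
    + left. apply IH; simpl; auto; try tauto; lia.
    + inversion Hs; subst.
      assert (Hgt : forall b, In b l -> (a < b)%nat)
        by (intros b Hb; eapply Forall_forall in H2; eauto).
      destruct (Nat.eq_dec a lo) as [->|Hne].
      * right. destruct K as [|K]; [simpl in Hl; lia|].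
        apply in_map. apply IH; auto.
        -- intros b Hb. specialize (Hgt b Hb). specialize (Hr b (or_intror Hb)). lia.
        -- simpl in Hl; lia.
      * left. apply IH; auto.
        intros b [Hb|Hb].
        -- subst b. specialize (Hr a (or_introl eq_refl)). lia.
        -- specialize (Hgt b Hb). pose proof (Hr b (or_intror Hb)).
           pose proof (Hr a (or_introl eq_refl)). lia.
Qed.

Lemma incs_bound (x : R) : 0 < x <= 1 -> forall N lo K,
  INR (length (incs lo N K)) <= (1 + x) ^ N * (/ x) ^ K.
Proof.
  intros Hx N. induction N as [|N IH]; intros lo K.
  - simpl. rewrite Rmult_1_l. apply pow_R1_Rle.
    rewrite <- Rinv_1. apply Rinv_le_contravar; lra.
  - simpl. rewrite length_app, plus_INR.
    assert (H1 : 0 <= (1 + x) ^ N) by (apply pow_le; lra).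
    assert (H2 : forall k, 0 <= (/ x) ^ k) by (intro; apply pow_le; left; apply Rinv_0_lt_compat; lra).
    destruct K as [|K].
    + simpl. specialize (IH (S lo) O). simpl in IH. nra.
    + rewrite length_map. pose proof (IH (S lo) (S K)) as A. pose proof (IH (S lo) K) as B.
      simpl in A |- *.
      assert (E : (1 + x) * (1 + x) ^ N * (/ x * (/ x) ^ K) =
                  (1 + x) ^ N * (/ x * (/ x) ^ K) + (1 + x) ^ N * (/ x) ^ K).
      { field. lra. }
      lra.
Qed.

Lemma mono (l : list nat) : (forall i, (S i < length l)%nat -> (nth i l 0 < nth (S i) l 0)%nat) ->
  forall i j, (i < j)%nat -> (j < length l)%nat -> (nth i l 0 < nth j l 0)%nat.
Proof.
  intros H i j. induction j as [|j IH]; intros Hij Hj; [lia|].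
  destruct (Nat.eq_dec i j) as [->|Hne].
  - apply H; lia.
  - specialize (IH ltac:(lia) ltac:(lia)). specialize (H j Hj). lia.
Qed.

Lemma adj_sorted (l : list nat) : (forall i, (S i < length l)%nat -> (nth i l 0 < nth (S i) l 0)%nat) ->
  StronglySorted lt l.
Proof.
  induction l as [|a l IH]; intros H; constructor.
  - apply IH. intros i Hi. apply (H (S i)). simpl; lia.
  - apply Forall_forall. intros b Hb.
    destruct (In_nth l b 0%nat Hb) as [j [Hj <-]].
    apply (mono (a :: l) H 0%nat (S j)); simpl; lia.
Qed.

Definition es (is js : list nat) : list nat :=
  map (fun l => nth l is 0 + nth l js 0)%nat (seq 0 (length is - 1)).

Lemma es_nth is js l : (l < length is - 1)%nat -> nth l (es is js) 0%nat = (nth l is 0 + nth l js 0)%nat.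
Proof.
  intros H. unfold es.
  set (f := (fun l => nth l is 0 + nth l js 0)%nat).
  rewrite nth_indep with (d' := f 0%nat).
  - rewrite map_nth, seq_nth; auto.
  - rewrite length_map, length_seq; auto.
Qed.

Lemma es_len is js : length (es is js) = (length is - 1)%nat.
Proof. unfold es. rewrite length_map, length_seq; auto. Qed.

Lemma facts eps n m is js : inFnm eps n m (is, js) ->
  (1 <= length is)%nat /\ length js = length is /\
  (forall l, (l < length is)%nat -> (0 < nth l is 0)%nat /\ (0 < nth l js 0)%nat) /\
  (forall l, (S l < length is)%nat -> (nth l is 0 + nth l js 0 <= nth (S l) is 0)%nat) /\
  nth (length is - 1) is 0%nat = n /\ nth (length is - 1) js 0%nat = m /\
  INR (length is) <= eps * INR n.
Proof.
  intros [k [Hk [HF [Hn Hm]]]]. unfold inFk in HF. simpl in *.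
  destruct HF as [H1 [Hli [Hlj [Hpos [Hinc [Hi [Hii Hiii]]]]]]]. subst k. repeat split; auto; try (apply Hpos; auto).
  - intros l Hl. rewrite <- Nat.add_1_r. apply Hi. lia.
  - rewrite <- Hn. auto.
Qed.

Lemma count_bound eps n m K s : NoDup s -> (forall p, In p s -> inFnm eps n m p) ->
  eps * INR n < INR K ->
  (length s <= length (incs 1 n K) * length (incs 1 n K))%nat.
Proof.
  intros Hnd Hs HK.
  set (g := fun p : list nat * list nat => (fst p, es (fst p) (snd p))).
  rewrite <- (length_map g s), <- length_prod.
  apply NoDup_incl_length.
  - apply NoDup_map_NoDup_ForallPairs; auto.
    intros [is js] [is' js'] Hp Hq Heq.
    unfold g in Heq; simpl in Heq. injection Heq as <- Hes.
    destruct (facts _ _ _ _ _ (Hs _ Hp)) as [A1 [A2 [A3 [A4 [A5 [A6 A7]]]]]].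
    destruct (facts _ _ _ _ _ (Hs _ Hq)) as [B1 [B2 [B3 [B4 [B5 [B6 B7]]]]]].
    f_equal. apply nth_ext with (d := 0%nat) (d' := 0%nat); [lia|].
    intros l Hl. rewrite A2 in Hl.
    destruct (Nat.eq_dec l (length is - 1)) as [->|Hne]; [congruence|].
    pose proof (es_nth is js l ltac:(lia)) as E1.
    pose proof (es_nth is js' l ltac:(lia)) as E2.
    rewrite Hes in E1. lia.
  - intros q Hq. apply in_map_iff in Hq. destruct Hq as [[is js] [<- Hp]].
    destruct (facts _ _ _ _ _ (Hs _ Hp)) as [A1 [A2 [A3 [A4 [A5 [A6 A7]]]]]].
    assert (Hkl : (length is < K)%nat) by (apply INR_lt; lra).
    assert (Hadj : forall i, (S i < length is)%nat -> (nth i is 0 < nth (S i) is 0)%nat).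
    { intros i Hi. specialize (A4 i Hi). specialize (A3 i ltac:(lia)). lia. }
    assert (Hle : forall i, (i < length is)%nat -> (nth i is 0 <= n)%nat).
    { intros i Hi. rewrite <- A5.
      destruct (Nat.eq_dec i (length is - 1)) as [->|Hne]; [lia|].
      apply Nat.lt_le_incl, mono; auto; lia. }
    unfold g; simpl. apply in_prod.
    + apply incs_complete; [apply adj_sorted; auto| |lia].
      intros a Ha. destruct (In_nth is a 0%nat Ha) as [j [Hj <-]].
      specialize (A3 j Hj). specialize (Hle j Hj). lia.
    + apply incs_complete; [apply adj_sorted| |rewrite es_len; lia].
      * rewrite es_len. intros i Hi. rewrite !es_nth by lia.
        specialize (A4 i ltac:(lia)). specialize (A3 (S i) ltac:(lia)). lia.
      * intros a Ha. destruct (In_nth _ a 0%nat Ha) as [j [Hj <-]].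
        rewrite es_len in Hj. rewrite es_nth by lia.
        specialize (A4 j ltac:(lia)). specialize (A3 j ltac:(lia)).
        specialize (Hle (S j) ltac:(lia)). lia.
Qed.
Lemma exp_le a b : a <= b -> exp a <= exp b.
Proof. intros [H|H]; [left; apply exp_increasing; auto|subst; lra]. Qed.

Lemma ln_nonneg y : 1 <= y -> 0 <= ln y.
Proof.
  intros H. destruct (Rle_or_lt 0 (ln y)) as [|H']; auto.
  apply exp_increasing in H'. rewrite exp_ln in H' by lra. rewrite exp_0 in H'. lra.
Qed.

Lemma key eps : 0 < eps -> let x := (if Rle_dec eps 1 then eps else 1) in
  x + eps * ln (/ x) <= 3 * sqrt eps.
Proof.
  intros He x. unfold x. destruct (Rle_dec eps 1) as [H1|H1].
  - set (t := sqrt eps).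
    assert (Ht : 0 < t) by (apply sqrt_lt_R0; auto).
    assert (Htt : t * t = eps) by (apply sqrt_sqrt; lra).
    assert (Ht1 : t <= 1) by (rewrite <- sqrt_1; apply sqrt_le_1_alt; auto).
    assert (HL : ln (/ eps) = 2 * - ln t).
    { rewrite ln_Rinv by lra. rewrite <- Htt, ln_mult by lra. ring. }
    set (u := - ln t) in HL.
    assert (Hu : exp u = / t).
    { unfold u. rewrite exp_Ropp, exp_ln; auto. }
    pose proof (exp_ineq1_le u) as Hx. rewrite Hu in Hx.
    assert (Hut : t * u <= 1).
    { assert (t * (1 + u) <= t * / t) by (apply Rmult_le_compat_l; lra).
      rewrite Rinv_r in H by lra. nra. }
    rewrite HL, <- Htt. nra.
  - rewrite Rinv_1, ln_1.
    assert (1 <= sqrt eps) by (rewrite <- sqrt_1; apply sqrt_le_1_alt; lra). lra.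
Qed.

Lemma ln2_pos : 0 < ln 2.
Proof. pose proof ln_lt_2. lra. Qed.

Lemma bound_real eps n K A :
  0 < eps -> INR K <= eps * INR n + 1 ->
  let x := (if Rle_dec eps 1 then eps else 1) in
  INR A <= (1 + x) ^ n * (/ x) ^ K ->
  INR A * INR A <= exp (2 * ln (/ x)) * Rpower 2 (6 * sqrt eps / ln 2 * INR n).
Proof.
  intros He HK x HA.
  assert (Hx : 0 < x <= 1) by (unfold x; destruct (Rle_dec eps 1); lra).
  set (L := ln (/ x)).
  assert (HL : 0 <= L).
  { apply ln_nonneg. rewrite <- Rinv_1. apply Rinv_le_contravar; lra. }
  assert (E1 : (1 + x) ^ n <= exp (INR n * x)).
  { apply Rle_trans with (exp x ^ n).
    - apply pow_incr. split; [lra|]. pose proof (exp_ineq1_le x). lra.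
    - rewrite <- Rpower_pow by apply exp_pos. unfold Rpower. rewrite ln_exp. lra. }
  assert (E2 : (/ x) ^ K = exp (INR K * L)).
  { rewrite <- Rpower_pow by (apply Rinv_0_lt_compat; lra). reflexivity. }
  assert (E3 : exp (INR K * L) <= exp ((eps * INR n + 1) * L)).
  { apply exp_le. apply Rmult_le_compat_r; auto. }
  assert (HA' : INR A <= exp (INR n * x + (eps * INR n + 1) * L)).
  { rewrite exp_plus. apply Rle_trans with ((1 + x) ^ n * (/ x) ^ K); auto.
    rewrite E2. apply Rmult_le_compat; auto.
    - apply pow_le; lra.
    - left; apply exp_pos. }
  assert (HA0 : 0 <= INR A) by apply pos_INR.
  apply Rle_trans with (exp (INR n * x + (eps * INR n + 1) * L) * exp (INR n * x + (eps * INR n + 1) * L)).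
  { apply Rmult_le_compat; auto. }
  rewrite <- exp_plus. unfold Rpower. rewrite <- exp_plus. apply exp_le.
  pose proof (key eps He) as Hk. fold x in Hk. fold L in Hk.
  pose proof ln2_pos.
  replace (6 * sqrt eps / ln 2 * INR n * ln 2) with (6 * sqrt eps * INR n) by (field; lra).
  change (ln (/ x)) with L in Hk.
  assert (INR n * (x + eps * L) <= INR n * (3 * sqrt eps)).
  { apply Rmult_le_compat_l. apply pos_INR. exact Hk. }
  lra.
Qed.

Theorem lemma4p5 :
  exists f : R -> R,
    (forall eps, 0 < eps -> 0 < f eps) /\
    (forall d, 0 < d -> exists h, 0 < h /\ forall eps, 0 < eps < h -> f eps < d) /\
    (forall eps, 0 < eps ->
       exists C, 0 < C /\
         forall (n m : nat), (1 <= n)%nat -> (1 <= m)%nat ->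
           forall s : list (list nat * list nat),
             NoDup s -> (forall p, In p s -> inFnm eps n m p) ->
             INR (length s) <= C * Rpower 2 (f eps * INR n)).
Proof.
  pose proof ln2_pos as Hl2.
  exists (fun eps => 6 * sqrt eps / ln 2). split; [|split].
  - intros eps He. pose proof (sqrt_lt_R0 eps He).
    unfold Rdiv. apply Rmult_lt_0_compat; [lra|]. apply Rinv_0_lt_compat; lra.
  - intros d Hd. set (q := d * ln 2 / 6).
    assert (Hq : 0 < q) by (unfold q; apply Rmult_lt_0_compat; [apply Rmult_lt_0_compat|]; lra).
    exists (q * q). split; [nra|].
    intros eps [He Heh].
    assert (sqrt eps < q).
    { rewrite <- (sqrt_square q) by lra. apply sqrt_lt_1_alt. lra. }
    unfold q in H.
    apply (Rmult_lt_reg_r (ln 2)); auto.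
    replace (6 * sqrt eps / ln 2 * ln 2) with (6 * sqrt eps) by (field; lra).
    lra.
  - intros eps He.
    set (x := (if Rle_dec eps 1 then eps else 1)).
    assert (Hx : 0 < x <= 1) by (unfold x; destruct (Rle_dec eps 1); lra).
    exists (exp (2 * ln (/ x))). split; [apply exp_pos|].
    intros n m Hn Hm s Hnd Hs.
    set (r := eps * INR n).
    assert (Hr : 0 <= r) by (unfold r; pose proof (pos_INR n); nra).
    destruct (archimed r) as [U1 U2].
    assert (Hup : (0 <= up r)%Z) by (apply le_IZR; lra).
    set (K := Z.to_nat (up r)).
    assert (HK : INR K = IZR (up r)) by (unfold K; rewrite INR_IZR_INZ, Z2Nat.id; auto).
    pose proof (count_bound eps n m K s Hnd Hs ltac:(fold r; lra)) as Hc.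
    apply le_INR in Hc. rewrite mult_INR in Hc.
    eapply Rle_trans; [exact Hc|].
    apply (bound_real eps n K); [auto|fold r; lra|].
    apply incs_bound. exact Hx.
Qed.
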